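(* Let $0\le k\le l$ be integers. For every $m\ge 1$, $$d_m(g_{l,k})=\begin{cases}\lfloor\tfrac{l+1}{m}\rfloor-1-\lfloor\tfrac{l-k}{m}\rfloor & \text{for } 1\le m\le k,\\ 0 & \text{for } m>k,\end{cases}$$ and, up to a unit, $g_{l,k}=\prod_{m\ge1}\Phi_m^{d_m(g_{l,k})}$.
   Context: In $\mathbb{Z}[q,q^{-1}]$ set $\{i\}_q=q^i-1$, $\{i\}_{q,n}=\{i\}_q\{i-1\}_q\cdots\{i-n+1\}_q$ (equal to $1$ for $n=0$), $\{n\}_q!=\{n\}_{q,n}$. For $0\le i\le k\le l$ set $h_{l,k,i}=\{l-i\}_{q,k-i}\,\{i\}_q!$, and let $g_{l,k}=\mathrm{GCD}(h_{l,k,0},\dots,h_{l,k,k})$, a greatest common divisor in the UFD $\mathbb{Z}[q,q^{-1}]$ (defined up to units $\pm q^j$). For nonzero $a\in\mathbb{Z}[q,q^{-1}]$ and $m\ge1$, $d_m(a)$ is the largest integer $i$ with $a\in\Phi_m^i\mathbb{Z}[q,q^{-1}]$, where $\Phi_m$ is the $m$th cyclotomic polynomial. $\lfloor r\rfloor$ is the floor of $r$. *)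

(* Defs.v *)
From HB Require Import structures.
From mathcomp Require Import all_boot all_order all_algebra all_field.
Set Implicit Arguments. Unset Strict Implicit. Unset Printing Implicit Defensive.
Import GRing.Theory Num.Theory.
Local Open Scope ring_scope.

(* Elements of Z[q,q^-1] are represented by polynomials p : {poly int}
   (p stands for the Laurent polynomial p itself; every Laurent polynomial is
   q^-j * p for some polynomial p, i.e. a unit multiple of a polynomial). *)

(* Divisibility in Z[q,q^-1]: a | b  iff  b = a * c with c Laurent, i.e.
   q^j * b = a * c for some j : nat and some polynomial c. *)
Definition ldvd (a b : {poly int}) : Prop :=
  exists (j : nat) (c : {poly int}), 'X^j * b = a * c.

Definition lassoc (a b : {poly int}) : Prop := ldvd a b /\ ldvd b a.

Definition is_lgcd (g : {poly int}) (hs : seq {poly int}) : Prop :=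
  (forall h, h \in hs -> ldvd g h) /\
  (forall d : {poly int}, (forall h, h \in hs -> ldvd d h) -> ldvd d g).

Definition qbr (i : nat) : {poly int} := 'X^i - 1.

(* {i}_{q,n} = {i}_q {i-1}_q ... {i-n+1}_q  (= 1 for n = 0);
   only used with n <= i, so no truncated subtraction occurs. *)
Definition qfall (i n : nat) : {poly int} := \prod_(j < n) qbr (i - j)%N.

Definition qfact (n : nat) : {poly int} := qfall n n.

Definition hlki (l k i : nat) : {poly int} := qfall (l - i) (k - i) * qfact i.

Definition is_dm (m : nat) (a : {poly int}) (n : nat) : Prop :=
  ldvd ('Phi_m ^+ n) a /\ ~ ldvd ('Phi_m ^+ n.+1) a.

Definition dval (l k m : nat) : nat := ((l.+1 %/ m) - 1 - ((l - k) %/ m))%N.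

(* Main.v *)
Require Import Defs.
From HB Require Import structures.
From mathcomp Require Import all_boot all_order all_algebra all_field.
From mathcomp Require Import zify.
From Stdlib Require Import Classical.
Import GRing.Theory Num.Theory.
Local Open Scope nat_scope.


Lemma divn_uniq (x q m : nat) : (0 < m)%N -> (q * m <= x)%N -> (x < q.+1 * m)%N ->
  (x %/ m = q)%N.
Proof.
move=> m0 h1 h2; apply/eqP; rewrite eqn_leq -ltnS ltn_divLR // h2 /=.
by rewrite leq_divRL.
Qed.

Lemma divD1 (a b m : nat) : (0 < m)%N -> ((a+b+1) %/ m <= a %/ m + b %/ m + 1)%N.
Proof.
move=> m0; rewrite -ltnS ltn_divLR //.
rewrite {1}(divn_eq a m) {1}(divn_eq b m).
have := ltn_pmod a m0; have := ltn_pmod b m0.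
move: (a %/ m) (a %% m) (b %/ m) (b %% m) => qa ra qb rb; nia.
Qed.

Definition Ev (l k m i : nat) : nat := ((l - i) %/ m - (l - k) %/ m + i %/ m)%N.
Definition Dv (l k m : nat) : nat :=
  if (m <= k)%N then ((l.+1 %/ m) - 1 - ((l - k) %/ m))%N else 0%N.

Lemma A1 (l k m i : nat) : (0 < m)%N -> (i <= k)%N -> (k <= l)%N ->
  (Dv l k m <= Ev l k m i)%N.
Proof.
move=> m0 ik kl; rewrite /Dv /Ev; case: ifP => // _.
have h1 := @divD1 (l - i) i m m0.
rewrite (_ : (l - i + i + 1 = l.+1)%N) in h1; last by lia.
have h2 : ((l - k) %/ m <= (l - i) %/ m)%N by apply: leq_div2r; lia.
move: h1 h2; move: (l.+1 %/ m) ((l - k) %/ m) ((l-i) %/ m) (i %/ m); lia.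
Qed.

Lemma A2 (l k m : nat) : (0 < m)%N -> (k <= l)%N ->
  exists2 i, (i <= k)%N & Ev l k m i = Dv l k m.
Proof.
move=> m0 kl; rewrite /Dv /Ev.
case: ifP => mk; last first.
  exists k => //; rewrite (divn_small (m:=k)); last by lia.
  lia.
have ld := divn_eq l m; have lr := ltn_pmod l m0.
move: (l %/ m) (l %% m) ld lr => q r ld lr.
have l1 := @divn_uniq l q m m0 ltac:(nia) ltac:(nia).
case: (r =P m.-1) => hr.
  exists 0%N => //.
  have l2 := @divn_uniq l.+1 q.+1 m m0 ltac:(nia) ltac:(nia).
  rewrite subn0 div0n l1 l2; lia.
exists m.-1; first by lia.
have l2 := @divn_uniq l.+1 q m m0 ltac:(nia) ltac:(nia).
have q0 : (0 < q)%N by nia.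
have l3 := @divn_uniq (l - m.-1) q.-1 m m0 ltac:(nia) ltac:(nia).
rewrite l2 l3 (divn_small (m:=m.-1)); last by lia.
lia.
Qed.
Local Open Scope ring_scope.

Local Notation pZC := (map_poly (intr : int -> algC)).

Definition mu (x : algC) (p : {poly int}) : nat := mup x (pZC p).

Lemma pZC_eq0 (p : {poly int}) : (pZC p == 0) = (p == 0).
Proof. by rewrite -!size_poly_eq0 size_map_inj_poly // => a b /intr_inj. Qed.

Lemma size_pZC (p : {poly int}) : size (pZC p) = size p.
Proof. by rewrite size_map_inj_poly // => a b /intr_inj. Qed.

Lemma mu_mul x (p q : {poly int}) : p != 0 -> q != 0 ->
  mu x (p * q) = (mu x p + mu x q)%N.
Proof. by move=> p0 q0; rewrite /mu rmorphM mupM // pZC_eq0. Qed.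

Lemma mu1 x : mu x 1 = 0%N.
Proof. by rewrite /mu rmorph1 mupNroot // root1. Qed.

Lemma prod_neq0 (I : Type) (s : seq I) (F : I -> {poly int}) :
  (forall i, F i != 0) -> \prod_(i <- s) F i != 0.
Proof.
move=> F0; elim: s => [|a s IH]; first by rewrite big_nil oner_eq0.
by rewrite big_cons mulf_neq0.
Qed.

Lemma mu_prod x (I : Type) (s : seq I) (F : I -> {poly int}) :
  (forall i, F i != 0) -> mu x (\prod_(i <- s) F i) = (\sum_(i <- s) mu x (F i))%N.
Proof.
move=> F0; elim: s => [|a s IH]; first by rewrite !big_nil mu1.
by rewrite !big_cons mu_mul ?IH ?prod_neq0.
Qed.

Lemma mu_exp x (p : {poly int}) n : p != 0 -> mu x (p ^+ n) = (n * mu x p)%N.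
Proof.
move=> p0; elim: n => [|n IH]; first by rewrite expr0 mu1.
by rewrite exprS mu_mul ?expf_neq0 // IH mulSn.
Qed.

Lemma mu_Xn x n : x != 0 -> mu x 'X^n = 0%N.
Proof.
by move=> x0; rewrite /mu map_polyXn mupNroot // /root hornerXn expf_neq0.
Qed.

Lemma mu_Xn0 n : mu 0 'X^n = n.
Proof.
by rewrite /mu map_polyXn -(subr0 'X) -polyC0 mup_XsubCX eqxx.
Qed.

Lemma mup_lt_size (x : algC) (Q : {poly algC}) : Q != 0 -> (mup x Q < size Q)%N.
Proof.
move=> Q0; have : (mup x Q <= mup x Q)%N by [].
rewrite mup_geq // => /(dvdp_leq Q0); by rewrite size_exp_XsubC.
Qed.

Lemma mupN (x : algC) (Q : {poly algC}) : Q != 0 -> mup x (- Q) = mup x Q.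
Proof.
move=> Q0; rewrite -mulN1r mupM ?oppr_eq0 ?oner_eq0 // mupNroot //.
by rewrite /root hornerN hornerC oppr_eq0 oner_eq0.
Qed.

Lemma XnsubC_neq0 n : (0 < n)%N -> ('X^n - 1 : {poly int}) != 0.
Proof. by move=> n0; rewrite -polyC1 monic_neq0 // monicXnsubC. Qed.

Lemma mu_Xn1 x n : (0 < n)%N -> mu x ('X^n - 1) = (x ^+ n == 1 : nat).
Proof.
have e : pZC ('X^n - 1) = 'X^n - 1.
  have eX : pZC 'X^n = 'X^n by rewrite map_polyXn.
  by rewrite rmorphB rmorph1; congr (_ - _); exact: eX.
move=> n0; rewrite /mu e.
have nz : ('X^n - 1 : {poly algC}) != 0 by rewrite -polyC1 monic_neq0 // monicXnsubC.
case: eqP => xn.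
  apply/eqP; rewrite eqn_leq mup_leq // mup_geq // expr1 andbC.
  rewrite dvdp_XsubCl /root !hornerE xn subrr eqxx /=.
  rewrite separable_nosquare //; last by rewrite size_XsubC.
  by apply: separable_Xn_sub_1; rewrite pnatr_eq0 -lt0n.
by rewrite mupNroot // /root !hornerE subr_eq0; apply/eqP.
Qed.

Lemma prim_uniq (x : algC) m d : m.-primitive_root x -> d.-primitive_root x -> d = m.
Proof.
move=> pm pd; apply/eqP; rewrite eqn_dvd.
by rewrite (prim_order_dvd pm) (prim_order_dvd pd) !prim_expr_order ?eqxx.
Qed.

Lemma mu_Phi x d : (0 < d)%N -> mu x 'Phi_d = (d.-primitive_root x : nat).
Proof.
move=> d0; have [w pw] := C_prim_root_exists d0.
rewrite /mu (Cintr_Cyclotomic pw).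
have nz : cyclotomic w d != 0 by rewrite monic_neq0 // cyclotomic_monic.
case: (boolP (d.-primitive_root x)) => px; last first.
  by rewrite mupNroot // root_cyclotomic.
apply/eqP; rewrite eqn_leq mup_leq // mup_geq // expr1 andbC.
rewrite dvdp_XsubCl root_cyclotomic // px /=.
apply/negP => dv.
have : (('X - x%:P) ^+ 2 %| 'X^d - 1).
  apply: (dvdp_trans dv); rewrite (prod_cyclotomic pw) (big_rem d) /=.
    by rewrite divnn d0 expr1 dvdp_mulIl.
  by rewrite -dvdn_divisors.
rewrite separable_nosquare //; last by rewrite size_XsubC.
by apply: separable_Xn_sub_1; rewrite pnatr_eq0 -lt0n.
Qed.

Lemma qbr_monic n : (0 < n)%N -> qbr n \is monic.
Proof. by move=> n0; rewrite /qbr -polyC1 monicXnsubC. Qed.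

Lemma qfall_monic i n : (n <= i)%N -> qfall i n \is monic.
Proof.
move=> ni; rewrite /qfall; apply: monic_prod => j _; apply: qbr_monic.
have := ltn_ord j; lia.
Qed.

Lemma hlki_monic l k i : (i <= k)%N -> (k <= l)%N -> hlki l k i \is monic.
Proof.
move=> ik kl; rewrite /hlki /qfact; rewrite monicMl; apply: qfall_monic => //; lia.
Qed.

Lemma qfall_S i n : qfall i n.+1 = qfall i n * qbr (i - n).
Proof. by rewrite /qfall big_ord_recr. Qed.

Lemma mu_qfall_prim x m i n : (0 < m)%N -> m.-primitive_root x -> (n <= i)%N ->
  mu x (qfall i n) = (i %/ m - (i - n) %/ m)%N.
Proof.
move=> m0 px; elim: n => [|n IH] ni.
  by rewrite /qfall big_ord0 mu1 subn0 subnn.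
rewrite qfall_S mu_mul ?monic_neq0 ?qfall_monic ?qbr_monic ?IH //; try lia.
rewrite /qbr mu_Xn1; last by lia.
rewrite -(prim_order_dvd px).
have hS := @divnS (i - n.+1) m m0.
rewrite (_ : (i - n.+1).+1 = i - n)%N in hS; last by lia.
have h2 : ((i - n) %/ m <= i %/ m)%N by apply: leq_div2r; lia.
rewrite hS in h2 *.
move: h2; case: (m %| i - n)%N => /=; move: (i %/ m)%N ((i - n.+1) %/ m)%N; lia.
Qed.

Lemma mu_qfall_nonroot x i n : (forall j, (0 < j)%N -> x ^+ j != 1) -> (n <= i)%N ->
  mu x (qfall i n) = 0%N.
Proof.
move=> nr; elim: n => [|n IH] ni.
  by rewrite /qfall big_ord0 mu1.
rewrite qfall_S mu_mul ?monic_neq0 ?qfall_monic ?qbr_monic ?IH //; try lia.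
rewrite /qbr mu_Xn1; last by lia.
by rewrite (negbTE (nr _ _)) //; lia.
Qed.

Lemma mu_hlki_prim x m l k i : (0 < m)%N -> m.-primitive_root x ->
  (i <= k)%N -> (k <= l)%N -> mu x (hlki l k i) = Ev l k m i.
Proof.
move=> m0 px ik kl; rewrite /hlki /qfact.
rewrite mu_mul ?monic_neq0 ?qfall_monic //; try lia.
rewrite !(@mu_qfall_prim _ m _ _ m0 px) //; try lia.
rewrite subnn div0n subn0 /Ev.
by rewrite (_ : (l - i - (k - i) = l - k)%N); last by lia.
Qed.

Lemma mu_hlki_nonroot x l k i : (forall j, (0 < j)%N -> x ^+ j != 1) ->
  (i <= k)%N -> (k <= l)%N -> mu x (hlki l k i) = 0%N.
Proof.
move=> nr ik kl; rewrite /hlki /qfact.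
rewrite mu_mul ?monic_neq0 ?qfall_monic //; try lia.
by rewrite !mu_qfall_nonroot //; lia.
Qed.

Definition Gp (l k : nat) : {poly int} := \prod_(1 <= m < k.+1) 'Phi_m ^+ dval l k m.

Lemma Gp_monic l k : Gp l k \is monic.
Proof. by apply: monic_prod => d _; apply: monic_exp; apply: Cyclotomic_monic. Qed.

Lemma mu_Gp_prim x m l k : (0 < m)%N -> m.-primitive_root x ->
  mu x (Gp l k) = Dv l k m.
Proof.
move=> m0 px; rewrite /Gp mu_prod; last by move=> d; rewrite monic_neq0 // monic_exp // Cyclotomic_monic.
transitivity (\sum_(d <- index_iota 1 k.+1) (if d == m then dval l k d else 0))%N.
  apply: eq_big_seq => d; rewrite mem_index_iota => /andP[d1 _].
  rewrite mu_exp ?monic_neq0 ?Cyclotomic_monic // mu_Phi //.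
  case: eqP => [->|ne]; first by rewrite px muln1.
  have : ~~ d.-primitive_root x by apply/negP => pd; apply: ne; exact: prim_uniq px pd.
  by move/negbTE->; rewrite muln0.
rewrite /Dv; case: (boolP (m \in index_iota 1 k.+1)) => hm.
  have u : uniq (index_iota 1 k.+1) by rewrite /index_iota iota_uniq.
  rewrite (bigD1_seq m hm u) /= eqxx big1 ?addn0; last by move=> d /negbTE ->.
  move: hm; rewrite mem_index_iota => /andP[_]; rewrite ltnS => ->; done.
rewrite big1_seq; last by move=> d /andP[_ hd]; case: eqP => // ed; move: hm; rewrite -ed hd.
move: hm; rewrite mem_index_iota m0 /= ltnS => /negbTE ->; done.
Qed.

Lemma mu_Gp_nonroot x l k : (forall d, (0 < d)%N -> ~~ d.-primitive_root x) ->
  mu x (Gp l k) = 0%N.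
Proof.
move=> np; rewrite /Gp mu_prod; last by move=> d; rewrite monic_neq0 // monic_exp // Cyclotomic_monic.
rewrite big1_seq // => d /andP[_]; rewrite mem_index_iota => /andP[d1 _].
by rewrite mu_exp ?monic_neq0 ?Cyclotomic_monic // mu_Phi // (negbTE (np _ _)) ?muln0.
Qed.

Lemma dvdC (P Q : {poly algC}) : P != 0 -> Q != 0 ->
  (forall x, (mup x P <= mup x Q)%N) -> P %| Q.
Proof.
move: {2}(size P) (leqnn (size P)) => n.
elim: n P Q => [|n IH] P Q sP P0 Q0 H.
  by move: P0; rewrite -size_poly_eq0; move: sP; case: (size P).
case: (boolP (size P == 1)) => s1.
  by case/size_poly1P: s1 => c c0 ->; rewrite -alg_polyC dvdpZl // dvd1p.
case/closed_rootP: s1 => x rx.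
have mx : (0 < mup x P)%N by rewrite -XsubC_dvd // dvdp_XsubCl.
have rQ : root Q x.
  by rewrite -dvdp_XsubCl XsubC_dvd //; apply: leq_trans mx (H x).
case/factor_theorem: rx => P' eP; case/factor_theorem: rQ => Q' eQ.
have P'0 : P' != 0 by apply: contraNneq P0 => e; rewrite eP e mul0r.
have Q'0 : Q' != 0 by apply: contraNneq Q0 => e; rewrite eQ e mul0r.
rewrite eP eQ dvdp_mul2r ?polyXsubC_eq0 //; apply: IH => //.
  move: sP; rewrite eP size_Mmonic ?monicXsubC // size_XsubC addn2 /=; by [].
move=> y; have := H y; rewrite eP eQ !mupM ?polyXsubC_eq0 //.
by rewrite leq_add2r.
Qed.

Lemma divC (p q : {poly int}) : p \is monic -> q != 0 ->
  (forall x, (mu x p <= mu x q)%N) -> exists c, q = p * c.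
Proof.
move=> mp q0 H.
have p0 : p != 0 by rewrite monic_neq0.
have hC : pZC p %| pZC q by apply: dvdC; rewrite ?pZC_eq0.
have e := Pdiv.RingMonic.rdivp_eq mp q.
set d := Pdiv.CommonRing.rdivp q p in e; set r := Pdiv.CommonRing.rmodp q p in e.
suff r0 : r = 0 by exists d; rewrite mulrC {1}e r0 addr0.
apply/eqP; apply: contraT => r0.
have : pZC p %| pZC r.
  by move: hC; rewrite {1}e rmorphD rmorphM /= dvdp_addr // dvdp_mull.
have r0' : pZC r != 0 by rewrite pZC_eq0.
move/(dvdp_leq r0'); rewrite !size_pZC.
have := Pdiv.Ring.ltn_rmodp q p; rewrite p0 -/r => lt.
by rewrite leqNgt lt.
Qed.

Lemma root_cases (x : algC) :
  (exists2 m, (0 < m)%N & m.-primitive_root x) \/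
  ((forall j, (0 < j)%N -> x ^+ j != 1) /\
   (forall d, (0 < d)%N -> ~~ d.-primitive_root x)).
Proof.
case: (classic (exists2 m, (0 < m)%N & m.-primitive_root x)) => [h|h]; [by left|right].
split.
  move=> j j0; apply/eqP => xj.
  have [m pm _] := prim_order_exists j0 xj.
  by apply: h; exists m => //; apply: prim_order_gt0 pm.
by move=> d d0; apply/negP => pd; apply: h; exists d.
Qed.

Lemma muGh x l k i : (i <= k)%N -> (k <= l)%N ->
  (mu x (Gp l k) <= mu x (hlki l k i))%N.
Proof.
move=> ik kl; case: (root_cases x) => [[m m0 px] | [nr np]].
  by rewrite (mu_Gp_prim _ _ _ _ m0 px) (mu_hlki_prim _ _ _ _ _ m0 px) //; apply: A1.
by rewrite mu_Gp_nonroot.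
Qed.

Theorem lemma4p1 (k l : nat) (hkl : (k <= l)%N) (g : {poly int})
  (hg : is_lgcd g [seq hlki l k i | i <- iota 0 k.+1]) :
  (forall m : nat, (0 < m)%N ->
     is_dm m g (if (m <= k)%N then dval l k m else 0%N)) /\
  lassoc g (\prod_(1 <= m < k.+1) 'Phi_m ^+ dval l k m).
Proof.
have Gm := Gp_monic l k.
have G0 : Gp l k != 0 by rewrite monic_neq0.
have GdG : ldvd (Gp l k) g.
  apply: hg.2 => h /mapP[i]; rewrite mem_iota add0n ltnS => /andP[_ ik] ->.
  have [c ec] := divC _ _ Gm (monic_neq0 (hlki_monic _ _ _ ik hkl)) (fun x => muGh x _ _ _ ik hkl).
  by exists 0%N, c; rewrite expr0 mul1r.
have gdh : forall i, (i <= k)%N -> ldvd g (hlki l k i).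
  move=> i ik; apply: hg.1; apply/mapP; exists i => //.
  by rewrite mem_iota add0n ltnS ik.
have [j0 [d0 e0]] := gdh 0%N (leq0n k).
have h0m := hlki_monic _ _ _ (leq0n k) hkl.
have Xh0 : 'X^j0 * hlki l k 0 \is monic by rewrite monicMl ?monicXn.
have : g * d0 != 0 by rewrite -e0 monic_neq0.
rewrite mulf_eq0 negb_or => /andP[g0 d00].
have lc1 : lead_coef d0 * lead_coef g = 1.
  by rewrite mulrC -lead_coefM -e0; apply/monicP.
have lcg : (lead_coef g == 1) || (lead_coef g == -1).
  by have := intUnitRing.unitzPl lc1.
have gdG : ldvd g (Gp l k).
  set N := size g.
  set p := if lead_coef g == 1 then g else - g.
  have pm : p \is monic.
    rewrite /p; case: ifP => h1; first by apply/monicP/eqP.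
    move: lcg; rewrite h1 /= => /eqP h2.
    by apply/monicP; rewrite lead_coefN h2 opprK.
  have mup_ : forall x, mu x p = mu x g.
    by move=> x; rewrite /p; case: ifP => // _; rewrite /mu rmorphN mupN // pZC_eq0.
  have q0 : 'X^N * Gp l k != 0 by rewrite mulf_neq0 // monic_neq0 // monicXn.
  have Hx : forall x, (mu x p <= mu x ('X^N * Gp l k))%N.
    move=> x; rewrite mup_ mu_mul ?monic_neq0 ?monicXn //.
    case: (eqVneq x 0) => [->|x0].
      rewrite mu_Xn0; apply: leq_trans (leq_addr _ _); apply: ltnW.
      by rewrite /mu /N -(size_pZC g); apply: mup_lt_size; rewrite pZC_eq0.
    rewrite mu_Xn // add0n leqNgt; apply/negP => lt.
    case: (root_cases x) => [[m m0 px] | [nr np]].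
      have [i ik Ei] := A2 _ _ _ m0 hkl.
      have [ji [di ei]] := gdh i ik.
      have : g * di != 0 by rewrite -ei monic_neq0 // monicMl ?monicXn // hlki_monic.
      rewrite mulf_eq0 negb_or => /andP[_ di0].
      have := congr1 (mu x) ei.
      rewrite [mu x (g * _)]mu_mul // mu_mul ?monic_neq0 ?monicXn ?hlki_monic // mu_Xn // add0n.
      rewrite (mu_hlki_prim _ _ _ _ _ m0 px) // Ei -(mu_Gp_prim _ _ _ _ m0 px) => h.
      move: h lt; move: (mu x (Gp l k)) (mu x g) (mu x di); lia.
    have := congr1 (mu x) e0.
    rewrite [mu x (g * _)]mu_mul // mu_mul ?monic_neq0 ?monicXn ?hlki_monic // mu_Xn // add0n.
    rewrite mu_hlki_nonroot // => h.
    move: lt; rewrite (mu_Gp_nonroot _ l k np); move: h; move: (mu x g) (mu x d0); lia.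
  have [c ec] := divC _ _ pm q0 Hx.
  rewrite /p in ec; case: ifP ec => _ ec; [exists N, c | exists N, (- c)] => //.
  by rewrite mulrN -mulNr.
split; last by split.
move=> m m0.
have [z pz] := C_prim_root_exists m0.
have z0 : z != 0 by rewrite (prim_root_eq0 pz) -lt0n.
have muG : mu z (Gp l k) = Dv l k m := mu_Gp_prim _ _ _ _ m0 pz.
rewrite -/(Dv l k m) -/(Gp l k); split.
  have Pm : 'Phi_m ^+ (Dv l k m) \is monic by rewrite monic_exp // Cyclotomic_monic.
  have Hx : forall x, (mu x ('Phi_m ^+ (Dv l k m)) <= mu x (Gp l k))%N.
    move=> x; rewrite mu_exp ?monic_neq0 ?Cyclotomic_monic // mu_Phi //.
    case: (boolP (m.-primitive_root x)) => px; last by rewrite muln0.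
    by rewrite muln1 (mu_Gp_prim _ _ _ _ m0 px).
  have [e ee] := divC _ _ Pm G0 Hx.
  case: GdG => a [c ec]; exists a, (e * c); by rewrite ec ee mulrA.
move=> [j [c ec]].
case: gdG => b [c1 ec1].
have : g * c1 != 0 by rewrite -ec1 mulf_neq0 // monic_neq0 // monicXn.
rewrite mulf_eq0 negb_or => /andP[_ c10].
have Pm : 'Phi_m ^+ (Dv l k m).+1 != 0 by rewrite monic_neq0 // monic_exp // Cyclotomic_monic.
have : 'Phi_m ^+ (Dv l k m).+1 * c != 0 by rewrite -ec mulf_neq0 // monic_neq0 // monicXn.
rewrite mulf_eq0 negb_or => /andP[_ c0].
have X0 : forall n, ('X^n : {poly int}) != 0 by move=> n; rewrite monic_neq0 ?monicXn.
have h1 := congr1 (mu z) ec.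
rewrite mu_mul ?X0 // mu_Xn // mu_mul // mu_exp ?monic_neq0 ?Cyclotomic_monic // mu_Phi // pz in h1.
have h2 := congr1 (mu z) ec1.
rewrite mu_mul ?X0 // mu_Xn // muG mu_mul // in h2.
move: h1 h2; move: (Dv l k m) (mu z g) (mu z c) (mu z c1); lia.
Qed.
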